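(* Let $T$ be any fixed full binary tree with leaves identified with $[n]$, and leaf probabilities $q_1,\dots,q_n\in[0,1]$ with $\sum_iq_i=k\in\mathbb Z$. Let $\mu$ be the distribution of the indicator vector $\boldsymbol\xi\in\{0,1\}^n$ of the output of binary-tree pivotal sampling on $T$. Then $\mu$ is $k$-homogeneous, and for every $\mathcal S\subseteq[n]$ with $\Pr[\xi_\ell=1\ \forall\ell\in\mathcal S]>0$ and every $i\in[n]\setminus\mathcal S$ with positive conditioning probability, $$\sum_{j\in[n]}|\mathcal I^{\mathcal S}_\mu(i,j)|=2-2\Pr[\xi_i=1\mid\xi_\ell=1\ \forall\ell\in\mathcal S]\le 2 .$$ In particular $\mu$ is one-sided $\ell_\infty$-independent with parameter $2$.
   Context: Binary-tree pivotal sampling: let $T$ be a full binary tree whose leaves are identified with an index set, and let $q_i\in[0,1]$ be leaf probabilities with integer sum. Each node can store an index together with a current probability; initially each leaf $i$ stores $i$ with probability $q_i$, and the output set $\mathcal S_{\rm out}$ is empty. Repeatedly choose two sibling nodes that both store indices, say $i$ with probability $q_i$ and $j$ with probability $q_j$, with parent $P$, and remove them. If $q_i+q_j\le1$: with probability $q_i/(q_i+q_j)$ store $i$ at $P$ with probability $q_i+q_j$ ($j$ is rejected), otherwise store $j$ at $P$ with probability $q_i+q_j$ ($i$ is rejected). If $q_i+q_j>1$: with probability $(1-q_i)/(2-q_i-q_j)$ put $j$ into $\mathcal S_{\rm out}$ and store $i$ at $P$ with probability $q_i+q_j-1$; otherwise put $i$ into $\mathcal S_{\rm out}$ and store $j$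 at $P$ with probability $q_i+q_j-1$. When only the root stores an index, put it into $\mathcal S_{\rm out}$ iff its probability is $1$. One-sided influence: $\mathcal I^{\mathcal S}_\mu(i,j)=\Pr[\xi_j=1\mid \xi_i=1,\ \xi_\ell=1\ \forall\ell\in\mathcal S]-\Pr[\xi_j=1\mid \xi_\ell=1\ \forall\ell\in\mathcal S]$ (taken to be $0$ for $j\in\mathcal S$); one-sided $\ell_\infty$-independence with parameter $D$ means $\max_i\sum_j|\mathcal I^{\mathcal S}_\mu(i,j)|\le D$ for all $\mathcal S$. $k$-homogeneous: every realization has exactly $k$ ones. *)

(* Defs.v *)
From mathcomp Require Import all_boot all_order all_algebra.
Set Implicit Arguments. Unset Strict Implicit. Unset Printing Implicit Defensive.
Import Order.TTheory GRing.Theory Num.Theory.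
Local Open Scope ring_scope.

Inductive btree (n : nat) : Type :=
| BLeaf of 'I_n
| BNode of btree n & btree n.

Fixpoint leaves (n : nat) (t : btree n) : seq 'I_n :=
  match t with
  | BLeaf i => [:: i]
  | BNode l r => leaves l ++ leaves r
  end.

(* State after processing a subtree: (indices already put into S_out,
   index stored at the subtree root, its current probability). *)
Definition pstate (R : Type) (n : nat) := ({set 'I_n} * 'I_n * R)%type.

(* One merge step of two siblings storing (i, qi) and (j, qj); returns the
   branches with their probabilities.  Division uses MathComp's x/0 = 0. *)
Definition pivot_merge (R : realFieldType) (n : nat) (x y : pstate R n)
  : seq (R * pstate R n) :=
  let: (S1, i, qi) := x in
  let: (S2, j, qj) := y in
  let S0 := S1 :|: S2 in
  if qi + qj <= 1 then
    [:: (qi / (qi + qj), (S0, i, qi + qj));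
        (1 - qi / (qi + qj), (S0, j, qi + qj))]
  else
    let p := (1 - qi) / (2 - qi - qj) in
    [:: (p, (j |: S0, i, qi + qj - 1));
        (1 - p, (i |: S0, j, qi + qj - 1))].

(* Distribution (list of weighted branches) of the state after processing
   the whole subtree t; independent randomness in the two subtrees. *)
Fixpoint pivotal_dist (R : realFieldType) (n : nat) (q : 'I_n -> R)
  (t : btree n) : seq (R * pstate R n) :=
  match t with
  | BLeaf i => [:: (1, (set0, i, q i))]
  | BNode l r =>
      let dl := pivotal_dist q l in
      let dr := pivotal_dist q r in
      flatten (flatten
        [seq [seq [seq (x.1 * y.1 * v.1, v.2) | v <- pivot_merge x.2 y.2]
             | y <- dr] | x <- dl])
  end.

Definition pivotal_out (R : realFieldType) (n : nat) (s : pstate R n)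
  : {set 'I_n} :=
  let: (Sx, i, p) := s in if p == 1 then i |: Sx else Sx.

(* The law mu of the output set (equivalently, of its indicator vector xi). *)
Definition pivotal_mu (R : realFieldType) (n : nat) (q : 'I_n -> R)
  (t : btree n) : {set 'I_n} -> R :=
  fun A => \sum_(x <- pivotal_dist q t) x.1 * (pivotal_out x.2 == A)%:R.

Definition prob (R : realFieldType) (n : nat) (mu : {set 'I_n} -> R)
  (P : pred {set 'I_n}) : R := \sum_(A | P A) mu A.

Definition cond_prob (R : realFieldType) (n : nat) (mu : {set 'I_n} -> R)
  (P Q : pred {set 'I_n}) : R := prob mu (predI P Q) / prob mu Q.

Definition k_homogeneous (R : realFieldType) (n : nat)
  (mu : {set 'I_n} -> R) (k : int) : Prop :=
  forall A : {set 'I_n}, 0 < mu A -> (#|A|%:Z = k).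

Definition influence (R : realFieldType) (n : nat) (mu : {set 'I_n} -> R)
  (S : {set 'I_n}) (i j : 'I_n) : R :=
  if j \in S then 0 else
    cond_prob mu (fun A => j \in A) (fun A => (i \in A) && (S \subset A))
    - cond_prob mu (fun A => j \in A) (fun A => S \subset A).

(* One-sided l_infty-independence with parameter D (only over conditionings
   with positive probability, where the conditional laws are defined). *)
Definition one_sided_linf_indep (R : realFieldType) (n : nat)
  (mu : {set 'I_n} -> R) (D : R) : Prop :=
  forall S : {set 'I_n}, 0 < prob mu (fun A => S \subset A) ->
  forall i : 'I_n, 0 < prob mu (fun A => (i \in A) && (S \subset A)) ->
  \sum_(j : 'I_n) `|influence mu S i j| <= D.

(* Main.v *)
Require Import Defs.
From mathcomp Require Import all_boot all_order all_algebra.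
From mathcomp Require Import ring lra.
Import Order.TTheory GRing.Theory Num.Theory.
Local Open Scope ring_scope.
Set Implicit Arguments. Unset Strict Implicit. Unset Printing Implicit Defensive.

Fixpoint pv (R : realFieldType) n (q : 'I_n -> R) (t : btree n) : R :=
  match t with
  | BLeaf i => q i
  | BNode l r => let s := pv q l + pv q r in if s <= 1 then s else s - 1
  end.

Definition sinv (R : realFieldType) n (q : 'I_n -> R) (t : btree n)
  (x : R * pstate R n) : Prop :=
  [/\ 0 <= x.1, x.2.2 = pv q t, x.2.1.2 \in leaves t,
      ({subset x.2.1.1 <= leaves t} /\ x.2.1.2 \notin x.2.1.1) &

      #|x.2.1.1|%:R + pv q t = \sum_(k <- leaves t) q k].

Lemma pv_range (R : realFieldType) n (q : 'I_n -> R) (t : btree n) :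
  (forall i, 0 <= q i <= 1) -> 0 <= pv q t <= 1.
Proof.
move=> hq; elim: t => [i|l IHl r IHr] /=; first exact: hq.
case/andP: IHl => ? ?; case/andP: IHr => ? ?.
case: ifP => h; apply/andP; split; lra.
Qed.

Lemma card_disjU n (A B : {set 'I_n}) :
  (forall k, k \in A -> k \notin B) -> #|A :|: B| = (#|A| + #|B|)%N.
Proof.
move=> H; rewrite cardsU.
have -> : A :&: B = set0.
  by apply/setP=> k; rewrite !inE; case: (boolP (k \in A)) => // /H /negPf ->.
by rewrite cards0 subn0.
Qed.

Lemma in_dist_node (R : realFieldType) n (q : 'I_n -> R) l r x :
  x \in pivotal_dist q (BNode l r) ->
  exists a b v, [/\ a \in pivotal_dist q l, b \in pivotal_dist q r,
     v \in pivot_merge a.2 b.2 & x = (a.1 * b.1 * v.1, v.2)].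
Proof.
rewrite /=; case/flattenP => s /flatten_mapP [a ha] /mapP [b hb ->].
by case/mapP => v hv ->; exists a, b, v.
Qed.

Lemma div01 (R : realFieldType) (x y : R) : 0 <= x -> x <= y -> 0 <= x / y <= 1.
Proof.
move=> x0 xy; have [->|y0] := eqVneq y 0; first by rewrite invr0 mulr0 lexx ler01.
have yp : 0 < y by rewrite lt_def y0 (le_trans x0 xy).
by rewrite divr_ge0 ?(le_trans x0 xy) //= ler_pdivrMr // mul1r.
Qed.

Lemma dist_inv (R : realFieldType) n (q : 'I_n -> R) (t : btree n) :
  (forall i, 0 <= q i <= 1) -> uniq (leaves t) ->
  forall x, x \in pivotal_dist q t -> sinv q t x.
Proof.
move=> hq; elim: t => [i|l IHl r IHr] /=.
  move=> _ x; rewrite inE => /eqP -> /=; split => //=.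
  - by rewrite mem_seq1.
  - by split=> [k|]; rewrite inE.
  - by rewrite cards0 add0r big_seq1.
rewrite cat_uniq => /and3P [ul /hasPn dlr ur] x /in_dist_node [a [b [v []]]].
move=> /(IHl ul) ha /(IHr ur) hb.
case: a ha => wa [[Sa sa] pa]; case: b hb => wb [[Sb sb] pb].
case=> /= wb0 -> sbr [Sbr sbS] cbr; case=> /= wa0 -> sal [Sal saS] cal.
have dl : forall k, k \in leaves l -> k \notin leaves r.
  by move=> k kl; apply/negP => /dlr; rewrite kl.
have hl := pv_range l hq; have hr := pv_range r hq.
rewrite /pivot_merge.
have SaSb : forall k, k \in Sa -> k \notin Sb.
  by move=> k /Sal /dl; apply: contra => /Sbr.
have cS0 : #|Sa :|: Sb| = (#|Sa| + #|Sb|)%N by rewrite card_disjU.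
have saSb : sa \notin Sb by apply: contra (dl _ sal) => /Sbr.
have sbSa : sb \notin Sa by apply/negP => /Sal /dl; rewrite sbr.
have sub0 : {subset Sa :|: Sb <= leaves l ++ leaves r}.
  by move=> k; rewrite inE mem_cat => /orP [/Sal -> | /Sbr ->] //; rewrite orbT.
have sasb : sa != sb by apply/eqP => e; move: (dl _ sal); rewrite e sbr.
rewrite /sinv /= big_cat /=.
have la : 0 <= pv q l / (pv q l + pv q r) <= 1 by apply: div01; lra.
have lp : 0 <= (1 - pv q l) / (2 - pv q l - pv q r) <= 1 by apply: div01; lra.
case/andP: la => la0 la1; case/andP: lp => lp0 lp1.
have w0 : 0 <= wa * wb by exact: mulr_ge0.
case: ifP => hle; rewrite !inE => /orP [] /eqP -> -> /=.
- split => //; first exact: mulr_ge0.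
  + by rewrite mem_cat sal.
  + by split; [exact: sub0 | rewrite inE negb_or saS saSb].
  by rewrite cS0 natrD -cal -cbr; ring.
- split => //; first (apply: mulr_ge0 => //; lra).
  + by rewrite mem_cat sbr orbT.
  + by split; [exact: sub0 | rewrite inE negb_or sbSa sbS].
  by rewrite cS0 natrD -cal -cbr; ring.
- split => //; first exact: mulr_ge0.
  + by rewrite mem_cat sal.
  + split.
    * by move=> k; rewrite in_setU1 => /orP [/eqP -> | /sub0 //]; rewrite mem_cat sbr orbT.
    * by rewrite !inE !negb_or sasb saS saSb.
  by rewrite cardsU1 !inE negb_or sbSa sbS cS0 /= !natrD -cal -cbr; ring.
- split => //; first (apply: mulr_ge0 => //; lra).
  + by rewrite mem_cat sbr orbT.
  + split.
    * by move=> k; rewrite in_setU1 => /orP [/eqP -> | /sub0 //]; rewrite mem_cat sal.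
    * by rewrite !inE !negb_or eq_sym sasb sbSa sbS.
  by rewrite cardsU1 !inE negb_or saS saSb cS0 /= !natrD -cal -cbr; ring.
Qed.

Definition ev (R : realFieldType) n (phi : 'I_n -> bool -> R) (L : seq 'I_n)
  (A : {set 'I_n}) : R := \prod_(k <- L) phi k (k \in A).

Definition Gf (R : realFieldType) n (q : 'I_n -> R) phi (t : btree n) : R :=
  \sum_(x <- pivotal_dist q t) x.1 * ev phi (leaves t) x.2.1.1.
Definition Hf (R : realFieldType) n (q : 'I_n -> R) phi (t : btree n) : R :=
  \sum_(x <- pivotal_dist q t) x.1 * ev phi (leaves t) (x.2.1.2 |: x.2.1.1).

Lemma ev_split (R : realFieldType) n (phi : 'I_n -> bool -> R) (L1 L2 : seq 'I_n) (A B : {set 'I_n}) :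
  {subset A <= L1} -> {subset B <= L2} ->
  (forall k, k \in L1 -> k \notin L2) ->
  ev phi (L1 ++ L2) (A :|: B) = ev phi L1 A * ev phi L2 B.
Proof.
move=> AL BL d; rewrite /ev big_cat; congr (_ * _); apply: eq_big_seq => k kL;
  rewrite inE.
- have : k \notin B by apply: contra (d _ kL) => /BL.
  by move/negPf => ->; rewrite orbF.
- have : k \notin A by apply/negP => /AL /d; rewrite kL.
  by move/negPf => ->.
Qed.

Definition mcoef (R : realFieldType) (pl pr : R) := pl / (pl + pr).
Definition pcoef (R : realFieldType) (pl pr : R) := (1 - pl) / (2 - pl - pr).

Lemma merge_pt (R : realFieldType) n (phi : 'I_n -> bool -> R) (L1 L2 : seq 'I_n)
  (Sa Sb : {set 'I_n}) sa sb (pl pr : R) :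
  {subset Sa <= L1} -> sa \in L1 -> {subset Sb <= L2} -> sb \in L2 ->
  (forall k, k \in L1 -> k \notin L2) ->
  let e1 := ev phi L1 in let e2 := ev phi L2 in
  (\sum_(v <- pivot_merge (Sa, sa, pl) (Sb, sb, pr)) v.1 * ev phi (L1 ++ L2) v.2.1.1
   = if pl + pr <= 1 then e1 Sa * e2 Sb
     else pcoef pl pr * e1 Sa * e2 (sb |: Sb) + (1 - pcoef pl pr) * e1 (sa |: Sa) * e2 Sb)
  /\
  (\sum_(v <- pivot_merge (Sa, sa, pl) (Sb, sb, pr)) v.1 * ev phi (L1 ++ L2) (v.2.1.2 |: v.2.1.1)
   = if pl + pr <= 1 then mcoef pl pr * e1 (sa |: Sa) * e2 Sb + (1 - mcoef pl pr) * e1 Sa * e2 (sb |: Sb)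
     else e1 (sa |: Sa) * e2 (sb |: Sb)).
Proof.
move=> SaL saL SbL sbL d e1 e2.
have sub1 : {subset sa |: Sa <= L1}.
  by move=> k; rewrite in_setU1 => /orP [/eqP -> | /SaL].
have sub2 : {subset sb |: Sb <= L2}.
  by move=> k; rewrite in_setU1 => /orP [/eqP -> | /SbL].
rewrite /pivot_merge /mcoef /pcoef; case: ifP => _; rewrite !big_cons !big_nil /= !addr0; split.
- by rewrite !ev_split // /e1 /e2; ring.
- rewrite setUA ev_split // setUCA ev_split //; rewrite /e1 /e2; ring.
- rewrite setUCA ev_split // setUA ev_split //; rewrite /e1 /e2; ring.
- have -> : sa |: (sb |: (Sa :|: Sb)) = (sa |: Sa) :|: (sb |: Sb).
    by apply/setP => k; rewrite !inE; do !case: (_ == _); do !case: (_ \in _).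
  have -> : sb |: (sa |: (Sa :|: Sb)) = (sa |: Sa) :|: (sb |: Sb).
    by apply/setP => k; rewrite !inE; do !case: (_ == _); do !case: (_ \in _).
  rewrite ev_split //; rewrite /e1 /e2; ring.
Qed.

Lemma sum_node (R : realFieldType) n (q : 'I_n -> R) l r (F : pstate R n -> R) :
  \sum_(x <- pivotal_dist q (BNode l r)) x.1 * F x.2 =
  \sum_(a <- pivotal_dist q l) \sum_(b <- pivotal_dist q r)
     a.1 * b.1 * \sum_(v <- pivot_merge a.2 b.2) v.1 * F v.2.
Proof.
rewrite /= big_flatten /= big_flatten /= big_map; apply: eq_bigr => a _.
rewrite big_map; apply: eq_bigr => b _; rewrite big_map mulr_sumr.
by apply: eq_bigr => v _ /=; rewrite !mulrA.
Qed.

Lemma dsum1 (R : realFieldType) (I J : Type) (s1 : seq I) (s2 : seq J)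
  (f : I -> R) (g : J -> R) :
  (\sum_(a <- s1) f a) * (\sum_(b <- s2) g b) = \sum_(a <- s1) \sum_(b <- s2) f a * g b.
Proof. by rewrite big_distrl; apply: eq_bigr => a _; rewrite big_distrr. Qed.

Lemma dsum2 (R : realFieldType) (I J : Type) (s1 : seq I) (s2 : seq J)
  (f1 f2 : I -> R) (g1 g2 : J -> R) c1 c2 :
  c1 * (\sum_(a <- s1) f1 a) * (\sum_(b <- s2) g1 b) +
  c2 * (\sum_(a <- s1) f2 a) * (\sum_(b <- s2) g2 b) =
  \sum_(a <- s1) \sum_(b <- s2) (c1 * f1 a * g1 b + c2 * f2 a * g2 b).
Proof.
rewrite -!mulrA !dsum1 !mulr_sumr -big_split; apply: eq_bigr => a _.
rewrite !mulr_sumr -big_split; apply: eq_bigr => b _ /=; ring.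
Qed.

Lemma GH_node (R : realFieldType) n (q : 'I_n -> R) phi l r :
  (forall i, 0 <= q i <= 1) -> uniq (leaves l ++ leaves r) ->
  let pl := pv q l in let pr := pv q r in
  (Gf q phi (BNode l r) = if pl + pr <= 1 then Gf q phi l * Gf q phi r
     else pcoef pl pr * Gf q phi l * Hf q phi r + (1 - pcoef pl pr) * Hf q phi l * Gf q phi r)
  /\
  (Hf q phi (BNode l r) = if pl + pr <= 1 then
       mcoef pl pr * Hf q phi l * Gf q phi r + (1 - mcoef pl pr) * Gf q phi l * Hf q phi r
     else Hf q phi l * Hf q phi r).
Proof.
move=> hq u pl pr; have u' := u; move: u'; rewrite cat_uniq => /and3P [ul /hasPn dlr ur].
have d : forall k, k \in leaves l -> k \notin leaves r.
  by move=> k kl; apply/negP => /dlr; rewrite kl.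
have pt : forall a b, a \in pivotal_dist q l -> b \in pivotal_dist q r ->
  let e1 := ev phi (leaves l) in let e2 := ev phi (leaves r) in
  (\sum_(v <- pivot_merge a.2 b.2) v.1 * ev phi (leaves l ++ leaves r) v.2.1.1
   = if pl + pr <= 1 then e1 a.2.1.1 * e2 b.2.1.1
     else pcoef pl pr * e1 a.2.1.1 * e2 (b.2.1.2 |: b.2.1.1)
        + (1 - pcoef pl pr) * e1 (a.2.1.2 |: a.2.1.1) * e2 b.2.1.1)
  /\
  (\sum_(v <- pivot_merge a.2 b.2) v.1 * ev phi (leaves l ++ leaves r) (v.2.1.2 |: v.2.1.1)
   = if pl + pr <= 1 then mcoef pl pr * e1 (a.2.1.2 |: a.2.1.1) * e2 b.2.1.1
        + (1 - mcoef pl pr) * e1 a.2.1.1 * e2 (b.2.1.2 |: b.2.1.1)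
     else e1 (a.2.1.2 |: a.2.1.1) * e2 (b.2.1.2 |: b.2.1.1)).
  move=> a b ha hb; case: (dist_inv hq ul ha) => _ pa sa [Sa _] _.
  case: (dist_inv hq ur hb) => _ pb sb [Sb _] _.
  case: a ha pa sa Sa => wa [[Sa' sa'] pa'] /= _ -> sa Sa.
  case: b hb pb sb Sb => wb [[Sb' sb'] pb'] /= _ -> sb Sb.
  exact: merge_pt.
split.
- rewrite /Gf (sum_node q l r (fun s => ev phi (leaves l ++ leaves r) s.1.1)).
  rewrite (eq_big_seq (fun a => \sum_(b <- pivotal_dist q r) a.1 * b.1 *
     (if pl + pr <= 1 then ev phi (leaves l) a.2.1.1 * ev phi (leaves r) b.2.1.1
     else pcoef pl pr * ev phi (leaves l) a.2.1.1 * ev phi (leaves r) (b.2.1.2 |: b.2.1.1)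
        + (1 - pcoef pl pr) * ev phi (leaves l) (a.2.1.2 |: a.2.1.1) * ev phi (leaves r) b.2.1.1))); last first.
    move=> a ha; apply: eq_big_seq => b hb; by rewrite (pt a b ha hb).1.
  case: ifP => _.
  + by rewrite dsum1; apply: eq_bigr => a _; apply: eq_bigr => b _; ring.
  + by rewrite /Hf dsum2; apply: eq_bigr => a _; apply: eq_bigr => b _; ring.
- rewrite /Hf (sum_node q l r (fun s => ev phi (leaves l ++ leaves r) (s.1.2 |: s.1.1))).
  rewrite (eq_big_seq (fun a => \sum_(b <- pivotal_dist q r) a.1 * b.1 *
     (if pl + pr <= 1 then mcoef pl pr * ev phi (leaves l) (a.2.1.2 |: a.2.1.1) * ev phi (leaves r) b.2.1.1
        + (1 - mcoef pl pr) * ev phi (leaves l) a.2.1.1 * ev phi (leaves r) (b.2.1.2 |: b.2.1.1)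
     else ev phi (leaves l) (a.2.1.2 |: a.2.1.1) * ev phi (leaves r) (b.2.1.2 |: b.2.1.1)))); last first.
    move=> a ha; apply: eq_big_seq => b hb; by rewrite (pt a b ha hb).2.
  case: ifP => _.
  + by rewrite /Gf dsum2; apply: eq_bigr => a _; apply: eq_bigr => b _; ring.
  + by rewrite dsum1; apply: eq_bigr => a _; apply: eq_bigr => b _; ring.
Qed.

Definition upd (R : realFieldType) n (phi : 'I_n -> bool -> R) (i : 'I_n) (X : bool -> R) :=
  fun k => if k == i then X else phi k.
Definition fr (R : realFieldType) : bool -> R := fun _ => 1.
Definition inb (R : realFieldType) : bool -> R := fun b => (b : nat)%:R.
Arguments fr {R}. Arguments inb {R}.

Lemma GH_leaf (R : realFieldType) n (q : 'I_n -> R) phi i :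
  Gf q phi (BLeaf i) = phi i false /\ Hf q phi (BLeaf i) = phi i true.
Proof. by rewrite /Gf /Hf /ev /= !big_seq1 /= !inE eqxx !mul1r. Qed.

Lemma GH_loc (R : realFieldType) n (q : 'I_n -> R) phi psi t :
  (forall k, k \in leaves t -> phi k = psi k) ->
  Gf q phi t = Gf q psi t /\ Hf q phi t = Hf q psi t.
Proof.
move=> h; have e : forall A, ev phi (leaves t) A = ev psi (leaves t) A.
  by move=> A; apply: eq_big_seq => k /h ->.
by split; apply: eq_bigr => x _; rewrite e.
Qed.

Lemma GH_ge0 (R : realFieldType) n (q : 'I_n -> R) phi t :
  (forall i, 0 <= q i <= 1) -> uniq (leaves t) -> (forall k b, 0 <= phi k b) ->
  0 <= Gf q phi t /\ 0 <= Hf q phi t.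
Proof.
move=> hq u hp; have e : forall A, 0 <= ev phi (leaves t) A.
  by move=> A; apply: prodr_ge0 => k _.
split; rewrite /Gf /Hf big_seq; apply: sumr_ge0 => x hx;
  case: (dist_inv hq u hx) => w0 _ _ _ _; exact: mulr_ge0.
Qed.

Lemma le_by (R : realFieldType) (x y z : R) : y - x = z -> 0 <= z -> x <= y.
Proof. by move=> <-; rewrite subr_ge0. Qed.

Lemma coef_range (R : realFieldType) n (q : 'I_n -> R) l r :
  (forall i, 0 <= q i <= 1) ->
  (0 <= mcoef (pv q l) (pv q r) <= 1) /\ (0 <= pcoef (pv q l) (pv q r) <= 1) .
Proof.
move=> hq; have := pv_range l hq; have := pv_range r hq; move=> /andP[? ?] /andP[? ?].
split; apply: div01; lra.
Qed.

Lemma upd_out (R : realFieldType) n (phi : 'I_n -> bool -> R) i X (L : seq 'I_n) :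
  i \notin L -> forall k, k \in L -> upd phi i X k = phi k.
Proof. by move=> iL k kL; rewrite /upd; case: eqP => // e; move: kL; rewrite e (negPf iL). Qed.

Lemma det_inv (R : realFieldType) n (q : 'I_n -> R) (t : btree n) :
  (forall i, 0 <= q i <= 1) -> uniq (leaves t) -> forall phi i, i \in leaves t ->
  Gf q (upd phi i inb) t * Hf q (upd phi i fr) t
    <= Gf q (upd phi i fr) t * Hf q (upd phi i inb) t.
Proof.
move=> hq; elim: t => [i'|l IHl r IHr] u phi i hi.
  move: hi; rewrite mem_seq1 => /eqP ->.
  have [g1 h1] := GH_leaf q (upd phi i' inb) i'.
  have [g2 h2] := GH_leaf q (upd phi i' fr) i'.
  by rewrite g1 h1 g2 h2 /upd eqxx /inb /fr /= mul0r mul1r ler01.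
have u' := u; move: u'; rewrite /= cat_uniq => /and3P [ul /hasPn dlr ur].
have d : forall k, k \in leaves l -> k \notin leaves r.
  by move=> k kl; apply/negP => /dlr; rewrite kl.
have [/andP [ma0 ma1] /andP [pa0 pa1]] := coef_range l r hq.
have [G1 H1] := GH_node (upd phi i inb) (l:=l) (r:=r) hq u.
have [G2 H2] := GH_node (upd phi i fr) (l:=l) (r:=r) hq u.
rewrite G1 H1 G2 H2 {G1 H1 G2 H2}.
set a := mcoef _ _ in ma0 ma1 *; set p := pcoef _ _ in pa0 pa1 *.
move: hi; rewrite mem_cat => /orP [il | ir].
- have ir := d _ il.
  have [g1 h1] := GH_loc q (t:=r) (upd_out phi inb ir).
  have [g2 h2] := GH_loc q (t:=r) (upd_out phi fr ir).
  rewrite g1 h1 g2 h2; have IH := IHl ul phi i il; move: IH.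
  set gi := Gf q _ l; set hf := Hf q _ l; set gf := Gf q _ l; set hi := Hf q _ l.
  set ga := Gf q phi r; set ha := Hf q phi r.
  move=> IH; have D : 0 <= gf * hi - gi * hf by rewrite subr_ge0.
  case: ifP => _.
  + apply: (le_by (z := a * ga ^+ 2 * (gf * hi - gi * hf))); first ring.
    by apply: mulr_ge0 => //; apply: mulr_ge0 => //; apply: sqr_ge0.
  + apply: (le_by (z := p * ha ^+ 2 * (gf * hi - gi * hf))); first ring.
    by apply: mulr_ge0 => //; apply: mulr_ge0 => //; apply: sqr_ge0.
- have il : i \notin leaves l by apply/negP => /d; rewrite ir.
  have [g1 h1] := GH_loc q (t:=l) (upd_out phi inb il).
  have [g2 h2] := GH_loc q (t:=l) (upd_out phi fr il).
  rewrite g1 h1 g2 h2; have IH := IHr ur phi i ir; move: IH.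
  set gi := Gf q _ r; set hf := Hf q _ r; set gf := Gf q _ r; set hi := Hf q _ r.
  set ga := Gf q phi l; set ha := Hf q phi l.
  move=> IH; have D : 0 <= gf * hi - gi * hf by rewrite subr_ge0.
  case: ifP => _.
  + apply: (le_by (z := (1 - a) * ga ^+ 2 * (gf * hi - gi * hf))); first ring.
    by apply: mulr_ge0 => //; apply: mulr_ge0; [lra | apply: sqr_ge0].
  + apply: (le_by (z := (1 - p) * ha ^+ 2 * (gf * hi - gi * hf))); first ring.
    by apply: mulr_ge0 => //; apply: mulr_ge0; [lra | apply: sqr_ge0].
Qed.

Lemma G_out (R : realFieldType) n (q : 'I_n -> R) t phi i X :
  i \notin leaves t -> Gf q (upd phi i X) t = Gf q phi t.
Proof. by move=> h; case: (GH_loc q (upd_out phi X h)). Qed.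
Lemma H_out (R : realFieldType) n (q : 'I_n -> R) t phi i X :
  i \notin leaves t -> Hf q (upd phi i X) t = Hf q phi t.
Proof. by move=> h; case: (GH_loc q (upd_out phi X h)). Qed.

Lemma upd_out2 (R : realFieldType) n (phi : 'I_n -> bool -> R) i j X Y (L : seq 'I_n) :
  i \notin L -> forall k, k \in L -> upd (upd phi i X) j Y k = upd phi j Y k.
Proof. by move=> iL k kL; rewrite /upd; case: eqP => // _; case: eqP => // e; move: kL; rewrite e (negPf iL). Qed.

Lemma G_out2 (R : realFieldType) n (q : 'I_n -> R) t phi i j X Y :
  i \notin leaves t -> Gf q (upd (upd phi i X) j Y) t = Gf q (upd phi j Y) t.
Proof. by move=> h; case: (GH_loc q (upd_out2 phi j X Y h)). Qed.
Lemma H_out2 (R : realFieldType) n (q : 'I_n -> R) t phi i j X Y :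
  i \notin leaves t -> Hf q (upd (upd phi i X) j Y) t = Hf q (upd phi j Y) t.
Proof. by move=> h; case: (GH_loc q (upd_out2 phi j X Y h)). Qed.

Definition Ev (R : realFieldType) n (q : 'I_n -> R) t (al be : R) phi i j X Y :=
  al * Gf q (upd (upd phi i X) j Y) t + be * Hf q (upd (upd phi i X) j Y) t.

Lemma upd_ge0 (R : realFieldType) n (phi : 'I_n -> bool -> R) i X :
  (forall k b, 0 <= phi k b) -> (forall b, 0 <= X b) -> forall k b, 0 <= upd phi i X k b.
Proof. by move=> h hX k b; rewrite /upd; case: eqP. Qed.

Lemma fr_ge0 (R : realFieldType) b : 0 <= (fr : bool -> R) b.
Proof. exact: ler01. Qed.
Lemma inb_ge0 (R : realFieldType) b : 0 <= (inb : bool -> R) b.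
Proof. by rewrite /inb; case: b => /=; rewrite ?ler01 ?lexx. Qed.

Ltac pos := repeat first [done | lra | apply: addr_ge0 | apply: mulr_ge0].

Lemma ray_inv (R : realFieldType) n (q : 'I_n -> R) (t : btree n) :
  (forall i, 0 <= q i <= 1) -> uniq (leaves t) ->
  forall phi, (forall k b, 0 <= phi k b) ->
  forall i j, i \in leaves t -> j \in leaves t -> i != j ->
  forall al be, 0 <= al -> 0 <= be ->
  Ev q t al be phi i j inb inb * Ev q t al be phi i j fr fr
    <= Ev q t al be phi i j inb fr * Ev q t al be phi i j fr inb.
Proof.
move=> hq; elim: t => [i'|l IHl r IHr] u phi hp i j hi hj ij al be al0 be0.
  by move: hi hj ij; rewrite !mem_seq1 => /eqP -> /eqP ->; rewrite eqxx.
have u' := u; move: u'; rewrite /= cat_uniq => /and3P [ul /hasPn dlr ur].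
have d : forall k, k \in leaves l -> k \notin leaves r.
  by move=> k kl; apply/negP => /dlr; rewrite kl.
have d' : forall k, k \in leaves r -> k \notin leaves l.
  by move=> k kr; apply/negP => /d; rewrite kr.
have [/andP [ma0 ma1] /andP [pa0 pa1]] := coef_range l r hq.
rewrite /Ev.
have [G1 H1] := GH_node (upd (upd phi i inb) j inb) (l:=l) (r:=r) hq u.
have [G2 H2] := GH_node (upd (upd phi i inb) j fr) (l:=l) (r:=r) hq u.
have [G3 H3] := GH_node (upd (upd phi i fr) j inb) (l:=l) (r:=r) hq u.
have [G4 H4] := GH_node (upd (upd phi i fr) j fr) (l:=l) (r:=r) hq u.
rewrite G1 H1 G2 H2 G3 H3 G4 H4 {G1 H1 G2 H2 G3 H3 G4 H4}.
set a := mcoef _ _ in ma0 ma1 *; set p := pcoef _ _ in pa0 pa1 *.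
have [gl0 hl0] := GH_ge0 (phi := phi) (t := l) hq ul hp.
have [gr0 hr0] := GH_ge0 (phi := phi) (t := r) hq ur hp.
move: hi hj; rewrite !mem_cat => /orP [il | ir] /orP [jl | jr].
-
  have ir := d _ il; have jr := d _ jl.
  rewrite !(G_out _ _ _ jr) !(H_out _ _ _ jr) !(G_out _ _ _ ir) !(H_out _ _ _ ir).
  set ga := Gf q phi r; set ha := Hf q phi r.
  case: ifP => _.
  + have := IHl ul phi hp i j il jl ij (al * ga + be * (1 - a) * ha) (be * a * ga).
    rewrite /Ev => IH.
    refine (le_by _ (_ : 0 <= _ - _)); last first.
      rewrite subr_ge0; apply: IH.
      - pos.
      - pos.
    ring.
  + have := IHl ul phi hp i j il jl ij (al * p * ha) (al * (1 - p) * ga + be * ha).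
    rewrite /Ev => IH.
    refine (le_by _ (_ : 0 <= _ - _)); last first.
      rewrite subr_ge0; apply: IH.
      - pos.
      - pos.
    ring.
-
  have ir := d _ il; have jl := d' _ jr.
  rewrite !(G_out _ _ _ jl) !(H_out _ _ _ jl) !(G_out2 _ _ _ _ _ ir) !(H_out2 _ _ _ _ _ ir).
  have Dl := det_inv hq ul phi il; have Dr := det_inv hq ur phi jr.
  rewrite -subr_ge0 in Dl; rewrite -subr_ge0 in Dr.
  case: ifP => _.
  + refine (le_by _ (mulr_ge0 (mulr_ge0 (mulr_ge0 (mulr_ge0 be0 ma0) (mulr_ge0 be0 (_ : 0 <= 1 - a))) Dl) Dr)); [ring | lra].
  + refine (le_by _ (mulr_ge0 (mulr_ge0 (mulr_ge0 (mulr_ge0 al0 (_ : 0 <= 1 - p)) (mulr_ge0 al0 pa0)) Dl) Dr)); [ring | lra].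
-
  have il := d' _ ir; have jr := d _ jl.
  rewrite !(G_out _ _ _ jr) !(H_out _ _ _ jr) !(G_out2 _ _ _ _ _ il) !(H_out2 _ _ _ _ _ il).
  have Dl := det_inv hq ul phi jl; have Dr := det_inv hq ur phi ir.
  rewrite -subr_ge0 in Dl; rewrite -subr_ge0 in Dr.
  case: ifP => _.
  + refine (le_by _ (mulr_ge0 (mulr_ge0 (mulr_ge0 (mulr_ge0 be0 ma0) (mulr_ge0 be0 (_ : 0 <= 1 - a))) Dl) Dr)); [ring | lra].
  + refine (le_by _ (mulr_ge0 (mulr_ge0 (mulr_ge0 (mulr_ge0 al0 (_ : 0 <= 1 - p)) (mulr_ge0 al0 pa0)) Dl) Dr)); [ring | lra].
-
  have il := d' _ ir; have jl := d' _ jr.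
  rewrite !(G_out _ _ _ jl) !(H_out _ _ _ jl) !(G_out _ _ _ il) !(H_out _ _ _ il).
  set ga := Gf q phi l; set ha := Hf q phi l.
  case: ifP => _.
  + have := IHr ur phi hp i j ir jr ij (al * ga + be * a * ha) (be * (1 - a) * ga).
    rewrite /Ev => IH.
    refine (le_by _ (_ : 0 <= _ - _)); last first.
      rewrite subr_ge0; apply: IH.
      - pos.
      - pos.
    ring.
  + have := IHr ur phi hp i j ir jr ij (al * (1 - p) * ha) (al * p * ga + be * ha).
    rewrite /Ev => IH.
    refine (le_by _ (_ : 0 <= _ - _)); last first.
      rewrite subr_ge0; apply: IH.
      - pos.
      - pos.
    ring.
Qed.







Definition FT (R : realFieldType) n (mu : {set 'I_n} -> R) (T : {set 'I_n}) :=
  prob mu (fun A => T \subset A).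

Lemma FT_sum (R : realFieldType) n (mu : {set 'I_n} -> R) (T : {set 'I_n}) :
  FT mu T = \sum_A mu A * (T \subset A)%:R.
Proof. by rewrite /FT /prob big_mkcond; apply: eq_bigr => A _; case: (_ \subset _); rewrite ?mulr1 ?mulr0. Qed.

Lemma card_sum (R : realFieldType) n (A : {set 'I_n}) :
  #|A|%:R = \sum_j ((j \in A) : nat)%:R :> R.
Proof.
rewrite -sum1_card natr_sum big_mkcond; apply: eq_bigr => j _.
by case: (j \in A).
Qed.

Lemma hom_sum (R : realFieldType) n (mu : {set 'I_n} -> R) (k : int) (S T : {set 'I_n}) :
  (forall A, mu A != 0 -> #|A|%:Z = k) -> S \subset T ->
  \sum_j (if j \in S then 0 else FT mu (j |: T)) = (k%:~R - #|S|%:R) * FT mu T.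
Proof.
move=> hom ST.
have e : forall j, (if j \in S then 0 else FT mu (j |: T)) =
   \sum_A mu A * (T \subset A)%:R * ((j \notin S) && (j \in A) : nat)%:R.
  move=> j; rewrite FT_sum; case: (boolP (j \in S)) => jS /=.
    by rewrite big1 // => A _; rewrite mulr0.
  apply: eq_bigr => A _; rewrite subUset sub1set.
  by case: (j \in A); case: (T \subset A); rewrite /= ?mulr1 ?mulr0 ?mul0r.
rewrite (eq_bigr _ (fun j _ => e j)) exchange_big FT_sum mulr_sumr.
apply: eq_bigr => A _; rewrite -mulr_sumr.
  case: (boolP (T \subset A)) => TA /=; last by rewrite !mulr0 mul0r.
have SA : S \subset A := subset_trans ST TA.
have [->|mu0] := eqVneq (mu A) 0; first by rewrite !(mul0r, mulr0).
have -> : \sum_j ((j \notin S) && (j \in A) : nat)%:R = #|A|%:R - #|S|%:R :> R.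
  rewrite !card_sum -sumrB; apply: eq_bigr => j _.
  case: (boolP (j \in S)) => jS /=; last by rewrite subr0.
  by rewrite (subsetP SA _ jS) subrr.
have hA := hom A mu0.
have -> : (#|A|%:R : R) = k%:~R by rewrite -hA.
by rewrite mulr1; ring.
Qed.

Lemma infl_FT (R : realFieldType) n (mu : {set 'I_n} -> R) S i j :
  influence mu S i j = if j \in S then 0 else
    FT mu (j |: (i |: S)) / FT mu (i |: S) - FT mu (j |: S) / FT mu S.
Proof.
rewrite /influence /cond_prob /FT; case: (j \in S) => //.
congr (_ / _ - _ / _); apply: eq_bigl => A; rewrite /= ?subUset ?sub1set //.
Qed.


Lemma infl_main (R : realFieldType) n (mu : {set 'I_n} -> R) (k : int) :
  (forall A, mu A != 0 -> #|A|%:Z = k) ->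
  (forall (S : {set 'I_n}) (i j : 'I_n), i \notin S -> j \notin S -> i != j ->
     FT mu (j |: (i |: S)) * FT mu S <= FT mu (j |: S) * FT mu (i |: S)) ->
  forall S : {set 'I_n}, 0 < FT mu S -> forall i, i \notin S -> 0 < FT mu (i |: S) ->
  \sum_j `|influence mu S i j| = 2 - 2 * (FT mu (i |: S) / FT mu S).
Proof.
move=> hom nc S PS0 i iS Pi0.
set Pi := FT mu (i |: S) in Pi0 *; set PS := FT mu S in PS0 *.
have Pin : Pi != 0 by rewrite gt_eqF.
have PSn : PS != 0 by rewrite gt_eqF.
set f := fun j => influence mu S i j.
have ef : forall j, f j = (if j \in S then 0 else FT mu (j |: (i |: S))) / Pi
                    - (if j \in S then 0 else FT mu (j |: S)) / PS.
  by move=> j; rewrite /f infl_FT; case: (j \in S); rewrite ?mul0r ?subr0.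
have sum0 : \sum_j f j = 0.
  rewrite (eq_bigr _ (fun j _ => ef j)) sumrB -!mulr_suml.
  rewrite (hom_sum hom (subsetUr _ _)) (hom_sum hom (subxx _)) -/Pi -/PS.
  by rewrite !mulfK // subrr.
have neg : forall j, j != i -> f j <= 0.
  move=> j ji; rewrite /f infl_FT; case: (boolP (j \in S)) => // jS.
  have -> : FT mu (j |: (i |: S)) / Pi - FT mu (j |: S) / PS =
      (FT mu (j |: (i |: S)) * PS - FT mu (j |: S) * Pi) / (Pi * PS).
    by field; rewrite Pin PSn.
  apply: mulr_le0_ge0; first by rewrite subr_le0; apply: nc; rewrite // eq_sym.
  by rewrite invr_ge0 mulr_ge0 // ltW.
have fi : f i = 1 - Pi / PS.
  by rewrite /f infl_FT (negPf iS) setUA setUid -/Pi divff.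
rewrite (bigD1 i) //=.
have e : \sum_(j | j != i) `|influence mu S i j| = - \sum_(j | j != i) f j.
  by rewrite -sumrN; apply: eq_bigr => j ji; rewrite ler0_norm // neg.
move: sum0; rewrite (bigD1 i) //= => sum0.
have es : \sum_(j | j != i) f j = - f i by apply/eqP; rewrite -addr_eq0 addrC sum0.
have fi0 : 0 <= f i.
  rewrite -[f i]opprK -es -sumrN; apply: sumr_ge0 => j ji.
  by rewrite oppr_ge0 neg.
rewrite e es opprK -/(f i) ger0_norm // fi; ring.
Qed.

Definition phiS (R : realFieldType) n (T : {set 'I_n}) : 'I_n -> bool -> R :=
  fun k => if k \in T then inb else fr.

Lemma ev_phiS (R : realFieldType) n (T A : {set 'I_n}) (L : seq 'I_n) :
  (forall k, k \in L) -> ev (phiS R T) L A = (T \subset A)%:R.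
Proof.
move=> hL; rewrite /ev; case: (boolP (T \subset A)) => h.
  rewrite big1_seq // => k _; rewrite /phiS; case: (boolP (k \in T)) => kT //.
  by rewrite /inb (subsetP h _ kT).
case/subsetPn: h => k kT kA; apply/eqP; rewrite prodf_seq_eq0; apply/hasP.
by exists k; [exact: hL | rewrite /phiS kT /inb; move: kA; case: (k \in A) => //=].
Qed.

Lemma prob_dist (R : realFieldType) n (q : 'I_n -> R) t (P : pred {set 'I_n}) :
  prob (pivotal_mu q t) P = \sum_(x <- pivotal_dist q t) x.1 * (P (pivotal_out x.2))%:R.
Proof.
rewrite /prob /pivotal_mu exchange_big /=; apply: eq_bigr => x _.
rewrite -mulr_sumr; congr (_ * _).
rewrite big_mkcond (bigD1 (pivotal_out x.2)) //= eqxx big1 ?addr0.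
  by case: (P _).
by move=> A /negPf AnO; rewrite eq_sym AnO; case: (P A).
Qed.

Lemma probT (R : realFieldType) n (q : 'I_n -> R) t (T : {set 'I_n}) :
  (forall i, 0 <= q i <= 1) -> uniq (leaves t) -> (forall k, k \in leaves t) ->
  FT (pivotal_mu q t) T =
  if pv q t == 1 then Hf q (phiS R T) t else Gf q (phiS R T) t.
Proof.
move=> hq u hL; rewrite /FT prob_dist /Gf /Hf.
case: eqP => hp; apply: eq_big_seq => x hx; case: (dist_inv hq u hx) => _ px _ _ _;
  case: x hx px => w [[S s] p] /= _ ->; rewrite /pivotal_out ev_phiS //.
- by rewrite hp eqxx.
- by move/eqP/negPf: hp => ->.
Qed.

Lemma mu_hom (R : realFieldType) n (q : 'I_n -> R) t (k : int) :
  (forall i, 0 <= q i <= 1) -> uniq (leaves t) -> perm_eq (leaves t) (enum 'I_n) ->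
  \sum_(i : 'I_n) q i = k%:~R ->
  forall A, pivotal_mu q t A != 0 -> #|A|%:Z = k.
Proof.
move=> hq u hperm hsum A mu0.
case: (boolP (has (fun x => pivotal_out x.2 == A) (pivotal_dist q t))) => [/hasP [x hx /eqP xA] | /hasPn hn]; last first.
  move/eqP: mu0; case; rewrite /pivotal_mu big1_seq // => x /andP [_ hx].
  by rewrite (negPf (hn x hx)) mulr0.
case: (dist_inv hq u hx) => _ px _ [_ sS] card.
move: card; rewrite (perm_big _ hperm) big_enum /= hsum.
have /andP [p0 p1] := pv_range t hq.
case: x hx px xA sS => w [[S s] p] /= _ -> <- sS card.
rewrite /pivotal_out; case: eqP => hp.
  apply: (@intr_inj R); rewrite cardsU1 sS -card hp.
  by change ((1 + #|S|)%:R = #|S|%:R + 1 :> R); rewrite natrD addrC.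
have z0 : 0 <= k - #|S|%:Z.
  by rewrite -(ler0z R) intrB -card; change (0 <= #|S|%:R + pv q t - #|S|%:R); rewrite addrC addKr.
have z1 : k - #|S|%:Z < 1.
  rewrite -(ltrz1 R) intrB -card; change (#|S|%:R + pv q t - #|S|%:R < 1); rewrite addrC addKr.
  by rewrite lt_neqAle p1 andbT; apply/eqP.
apply/eqP; rewrite eq_sym -subr_eq0; apply/eqP.
by apply/eqP; rewrite eq_le z0 andbT -ltzD1 add0r.
Qed.

Lemma nc_tree (R : realFieldType) n (q : 'I_n -> R) t :
  (forall i, 0 <= q i <= 1) -> uniq (leaves t) -> (forall k, k \in leaves t) ->
  forall (S : {set 'I_n}) (i j : 'I_n), i \notin S -> j \notin S -> i != j ->
  FT (pivotal_mu q t) (j |: (i |: S)) * FT (pivotal_mu q t) S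
    <= FT (pivotal_mu q t) (j |: S) * FT (pivotal_mu q t) (i |: S).
Proof.
move=> hq u hL S i j iS jS ij.
have hp : forall k b, 0 <= phiS R S k b.
  by move=> k b; rewrite /phiS; case: (k \in S); [exact: inb_ge0 | exact: fr_ge0].
have e1 : forall k, upd (upd (phiS R S) i inb) j inb k = phiS R (j |: (i |: S)) k.
  by move=> k; rewrite /upd /phiS !in_setU1; case: (k == j) => //; case: (k == i).
have e2 : forall k, upd (upd (phiS R S) i inb) j fr k = phiS R (i |: S) k.
  move=> k; rewrite /upd /phiS !in_setU1; case: eqP => [->|_].
    by rewrite (negPf jS) orbF eq_sym (negPf ij).
  by case: (k == i).
have e3 : forall k, upd (upd (phiS R S) i fr) j inb k = phiS R (j |: S) k.
  move=> k; rewrite /upd /phiS !in_setU1; case: eqP => [->|_] //.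
  by case: eqP => [->|_] //; rewrite (negPf iS).
have e4 : forall k, upd (upd (phiS R S) i fr) j fr k = phiS R S k.
  move=> k; rewrite /upd /phiS; case: eqP => [->|_]; first by rewrite (negPf jS).
  by case: eqP => [->|_] //; rewrite (negPf iS).
have [G1 H1] := GH_loc q (t:=t) (fun k _ => e1 k).
have [G2 H2] := GH_loc q (t:=t) (fun k _ => e2 k).
have [G3 H3] := GH_loc q (t:=t) (fun k _ => e3 k).
have [G4 H4] := GH_loc q (t:=t) (fun k _ => e4 k).
rewrite !probT //.
have hi := hL i; have hj := hL j.
case: eqP => _.
- have := ray_inv hq u hp hi hj ij (ler0n _ 0) ler01.
  rewrite /Ev !mul0r !add0r !mul1r ?G1 ?H1 ?G2 ?H2 ?G3 ?H3 ?G4 ?H4 => h.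
  by rewrite [X in _ <= X]mulrC.
- have := ray_inv hq u hp hi hj ij ler01 (ler0n _ 0).
  rewrite /Ev !mul0r !addr0 !mul1r ?G1 ?H1 ?G2 ?H2 ?G3 ?H3 ?G4 ?H4 => h.
  by rewrite [X in _ <= X]mulrC.
Qed.

Theorem mainTheorem5 (R : realFieldType) (n : nat) (t : btree n)
  (q : 'I_n -> R) (k : int) :
  perm_eq (leaves t) (enum 'I_n) ->
  (forall i, 0 <= q i <= 1) ->
  \sum_(i : 'I_n) q i = k%:~R ->
  let mu := pivotal_mu q t in
  k_homogeneous mu k /\
  (forall S : {set 'I_n}, 0 < prob mu (fun A => S \subset A) ->
   forall i : 'I_n, i \notin S ->
   0 < prob mu (fun A => (i \in A) && (S \subset A)) ->
     \sum_(j : 'I_n) `|influence mu S i j|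
       = 2 - 2 * cond_prob mu (fun A => i \in A) (fun A => S \subset A)
     /\ \sum_(j : 'I_n) `|influence mu S i j| <= 2) /\
  one_sided_linf_indep mu 2.
Proof.
move=> hperm hq hsum mu.
have u : uniq (leaves t) by rewrite (perm_uniq hperm) enum_uniq.
have hL : forall x, x \in leaves t by move=> x; rewrite (perm_mem hperm) mem_enum.
have hom := mu_hom hq u hperm hsum.
have nc := nc_tree hq u hL.
have eP : forall (S : {set 'I_n}) i,
    prob mu (fun A => (i \in A) && (S \subset A)) = FT mu (i |: S).
  by move=> S i; apply: eq_bigl => A; rewrite subUset sub1set.
have part2 : forall S : {set 'I_n}, 0 < prob mu (fun A => S \subset A) ->
   forall i : 'I_n, i \notin S ->
   0 < prob mu (fun A => (i \in A) && (S \subset A)) ->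
     \sum_(j : 'I_n) `|influence mu S i j|
       = 2 - 2 * cond_prob mu (fun A => i \in A) (fun A => S \subset A)
     /\ \sum_(j : 'I_n) `|influence mu S i j| <= 2.
  move=> S PS i iS; rewrite eP => Pi.
  have cp : cond_prob mu (fun A => i \in A) (fun A => S \subset A) = FT mu (i |: S) / FT mu S.
    by rewrite /cond_prob -eP; congr (_ / _); apply: eq_bigl => A.
  rewrite cp (infl_main hom nc PS iS Pi); split => //.
  by rewrite lerBlDr lerDl mulr_ge0 // divr_ge0 // ltW.
split; [|split] => //.
- by move=> A /gt_eqF/negbT /hom.
- move=> S PS i Pi; case: (boolP (i \in S)) => iS; last by case: (part2 S PS i iS Pi).
  rewrite big1 ?lexx ?ler0n // => j _.
  rewrite /influence; case: (j \in S); first by rewrite normr0.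
  have e1 : prob mu (fun A => (i \in A) && (S \subset A)) = prob mu (fun A => S \subset A).
    apply: eq_bigl => A /=; case: (boolP (S \subset A)) => h; rewrite ?andbF ?andbT //.
    exact: (subsetP h).
  rewrite /cond_prob e1; apply/eqP; rewrite normr_eq0 subr_eq0; apply/eqP; congr (_ / _).
  apply: eq_bigl => A /=; case: (boolP (S \subset A)) => h; rewrite ?andbF ?andbT //.
  by rewrite (subsetP h _ iS) andbT.
Qed.
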